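(* Let $\alpha\in\mathbb{Z}_2^n$ with $\alpha_{n-1}=0$. Then $\mathrm{adp}^{\oplus}(\overline{\alpha},\overline{\alpha}\to0)\le\mathrm{adp}^{\oplus}(\alpha,\alpha\to0)$.
   Context: For $x\in\mathbb{Z}_2^n$, $x=(x_0,\dots,x_{n-1})$ is identified with the integer $\sum_i x_i2^{n-1-i}$ ($x_{n-1}$ least significant); $+$ is addition modulo $2^n$, $\oplus$ is bitwise XOR, $\overline{x}$ is the bitwise complement. $\mathrm{adp}^{\oplus}(\alpha,\beta\to\gamma)=4^{-n}\#\{(x,y)\in(\mathbb{Z}_2^n)^2: (x+\alpha)\oplus(y+\beta)=(x\oplus y)+\gamma\}$. *)

(* Defs.v *)
From mathcomp Require Import all_boot all_algebra.
Set Implicit Arguments. Unset Strict Implicit. Unset Printing Implicit Defensive.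
Import GRing.Theory Num.Theory.

(* Z_2^n as n-tuples of bits x = (x_0,...,x_{n-1}); x_{n-1} least significant. *)
Definition bv (n : nat) := n.-tuple bool.

Definition bv_val n (x : bv n) : nat :=
  \sum_(i < n) (tnth x i : nat) * 2 ^ (n.-1 - i).

Definition bv_of_nat n (k : nat) : bv n :=
  [tuple odd (k %/ 2 ^ (n.-1 - i)) | i < n].

(* addition modulo 2^n *)
Definition bv_add n (x y : bv n) : bv n := bv_of_nat n (bv_val x + bv_val y).
Definition bv_xor n (x y : bv n) : bv n := [tuple tnth x i (+) tnth y i | i < n].
Definition bv_compl n (x : bv n) : bv n := [tuple ~~ tnth x i | i < n].
Definition bv0 n : bv n := [tuple false | i < n].

Definition adp_xor n (a b g : bv n) : rat :=
  (#|[set xy : bv n * bv n |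
       bv_xor (bv_add xy.1 a) (bv_add xy.2 b) == bv_add (bv_xor xy.1 xy.2) g]|%:R)
  / (4 ^ n)%:R.

(* Main.v *)
Require Import Defs.
From mathcomp Require Import all_boot all_algebra zify.

Definition carry (b a c : bool) : bool := (b && a) || (c && (b || a)).

Definition cond (n A : nat) (c d : bool) (X Y : nat) : bool :=
  all (fun j => odd ((X + A + c) %/ 2 ^ j) (+) odd ((Y + A + d) %/ 2 ^ j)
                == odd (X %/ 2 ^ j) (+) odd (Y %/ 2 ^ j)) (iota 0 n).

Definition K n A c d := \sum_(0 <= X < 2 ^ n) \sum_(0 <= Y < 2 ^ n) (cond n A c d X Y : nat).

Lemma half3 (X A : nat) (c:bool) : (X + A + c)./2 = X./2 + A./2 + carry (odd X) (odd A) c.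
Proof. rewrite /carry -!divn2. have := modn2 X; have := modn2 A.
case: c; case: (odd X); case: (odd A) => /= h1 h2; lia. Qed.

Lemma divS2 (m j : nat) : m %/ 2 ^ j.+1 = m./2 %/ 2 ^ j.
Proof. by rewrite expnS divnMA divn2. Qed.

Lemma cond_rec n A c d X Y : cond n.+1 A c d X Y =
  (c == d) && cond n A./2 (carry (odd X) (odd A) c) (carry (odd Y) (odd A) d) X./2 Y./2.
Proof.
rewrite /cond /= expn0 !divn1 !oddD.
have -> : iota 1 n = [seq 1 + i | i <- iota 0 n] by rewrite -iotaDl.
rewrite all_map; congr andb.
  by case: c; case: d; case: (odd X); case: (odd Y); case: (odd A).
apply: eq_all => j /=.
by rewrite add1n !divS2 !half3.
Qed.

Lemma sum_double (F : nat -> nat) m :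
  \sum_(0 <= i < m.*2) F i = \sum_(0 <= i < m) (F i.*2 + F i.*2.+1).
Proof.
elim: m => [|m IH]; first by rewrite !big_geq.
rewrite doubleS !big_nat_recr //= ?IH ?addnA //; lia.
Qed.

Lemma K0 A c d : K 0 A c d = 1.
Proof. by rewrite /K /= !big_nat1. Qed.

Lemma odd_db i : odd i.*2 = false. Proof. by rewrite odd_double. Qed.

Lemma K_rec n A c d : K n.+1 A c d =
  (c == d) * (K n A./2 (carry false (odd A) c) (carry false (odd A) d) +
              K n A./2 (carry false (odd A) c) (carry true (odd A) d) +
              K n A./2 (carry true (odd A) c) (carry false (odd A) d) +
              K n A./2 (carry true (odd A) c) (carry true (odd A) d)).
Proof.
rewrite /K expnS mul2n sum_double.
under eq_bigr => X _ do rewrite !sum_double.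
case: eqP => [<-|ne]; last first.
  { rewrite mul0n big1 // => X _. rewrite !big1 //. all: move=> Y _; rewrite !cond_rec (_ : (c == d) = false) //; exact/negbTE/eqP. }
rewrite /= mul1n.
under eq_bigr => X _ do rewrite !big_split /=.
rewrite !big_split /= -!addnA.
congr (_ + (_ + (_ + _))).
all: apply: eq_bigr => X _; apply: eq_bigr => Y _.
all: by rewrite cond_rec eqxx /= ?odd_double ?doubleK ?uphalf_double.
Qed.

Lemma Kmix n A c d : c != d -> K n.+1 A c d = 0.
Proof. by move=> /negbTE h; rewrite K_rec h. Qed.

Lemma K1 A c : K 1 A c c = 4.
Proof. by rewrite K_rec !K0 eqxx. Qed.

Lemma Kinv n A : K n.+1 A true true <= 3 * K n.+1 A false false /\
                 K n.+1 A false false <= 3 * K n.+1 A true true.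
Proof.
elim: n A => [|n IH] A; first by rewrite !K1.
rewrite !(K_rec n.+1) !eqxx /=.
have [h1 h2] := IH A./2.
case: (odd A); rewrite /carry /= !(@Kmix n _ false true) // !(@Kmix n _ true false) //; lia.
Qed.

Lemma carry_neg b a c : ~~ carry b (~~ a) c = carry (~~ b) a (~~ c).
Proof. by case: a; case: b; case: c. Qed.

Lemma compl_odd n A : A < 2 ^ n.+1 -> odd (2 ^ n.+1 - 1 - A) = ~~ odd A.
Proof.
move=> hA; have hp : 0 < 2 ^ n by rewrite expn_gt0.
have h1 := modn2 (2 ^ n.+1 - 1 - A); have h2 := modn2 A.
move: h1 h2 hA; rewrite expnS.
case: (odd (2 * 2 ^ n - 1 - A)); case: (odd A) => /= h1 h2 hA; lia.
Qed.

Lemma compl_half n A : A < 2 ^ n.+1 -> (2 ^ n.+1 - 1 - A)./2 = 2 ^ n - 1 - A./2.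
Proof.
move=> hA; have hp : 0 < 2 ^ n by rewrite expn_gt0.
move: hA; rewrite expnS -!divn2; lia.
Qed.

Lemma half_lt n A : A < 2 ^ n.+1 -> A./2 < 2 ^ n.
Proof. by rewrite expnS -!divn2; lia. Qed.

Lemma Ksym n A c d : A < 2 ^ n -> K n (2 ^ n - 1 - A) c d = K n A (~~ c) (~~ d).
Proof.
elim: n A c d => [|n IH] A c d hA; first by rewrite !K0.
have hp : 0 < 2 ^ n by rewrite expn_gt0.
have ho : odd (2 ^ n.+1 - 1 - A) = ~~ odd A.
  have h1 := modn2 (2 ^ n.+1 - 1 - A); have h2 := modn2 A.
  move: h1 h2 hA; rewrite expnS.
  case: (odd (2 * 2 ^ n - 1 - A)); case: (odd A) => /= h1 h2 hA; lia.
have hh : (2 ^ n.+1 - 1 - A)./2 = 2 ^ n - 1 - A./2.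
  move: hA; rewrite expnS -!divn2; lia.
have hA' : A./2 < 2 ^ n by move: hA; rewrite expnS -!divn2; lia.
rewrite !K_rec ho hh !IH // !carry_neg /=.
have -> : (~~ c == ~~ d) = (c == d) by case: c; case: d.
case: (odd A); case: c; case: d; rewrite /carry /=; lia.
Qed.

Lemma Kmain n A : A < 2 ^ n.+1 -> odd A = false ->
  K n.+1 (2 ^ n.+1 - 1 - A) false false <= K n.+1 A false false.
Proof.
case: n => [|k] hA hodd; first by rewrite !K1.
rewrite !(K_rec k.+1) compl_odd // compl_half // hodd !Ksym ?half_lt //.
rewrite /carry /= !(@Kmix k _ false true) // !(@Kmix k _ true false) //.
have [h1 h2] := Kinv k A./2; lia.
Qed.

Lemma sum_rev (F : nat -> nat) n : \sum_(i < n) F (n.-1 - i) = \sum_(i < n) F i.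
Proof.
rewrite (reindex_inj rev_ord_inj) /=; apply: eq_bigr => i _; congr F.
case: i => i hi /=; lia.
Qed.

Lemma bits_sum n X : X < 2 ^ n -> \sum_(j < n) odd (X %/ 2 ^ j) * 2 ^ j = X.
Proof.
elim: n X => [|n IH] X hX.
  by rewrite big_ord0; move: hX; rewrite expn0; lia.
rewrite big_ord_recl /= expn0 divn1 muln1.
under eq_bigr => j _ do rewrite /bump /= add1n divS2 expnS mulnCA.
rewrite -big_distrr /= IH ?half_lt //.
by rewrite -{3}(odd_double_half X) -mul2n.
Qed.

Lemma bvK n X : X < 2 ^ n -> bv_val (bv_of_nat n X) = X.
Proof.
move=> hX; rewrite /bv_val.
under eq_bigr => i _ do rewrite tnth_mktuple.
by rewrite (sum_rev (fun k => odd (X %/ 2 ^ k) * 2 ^ k)) bits_sum.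
Qed.

Definition hbv {n} (X : 'I_(2 ^ n)) : bv n := bv_of_nat n X.

Lemma hbv_bij n : bijective (@hbv n).
Proof.
apply: inj_card_bij.
  by move=> X Y /(congr1 (@bv_val n)); rewrite !bvK // => /val_inj.
by rewrite card_tuple card_bool card_ord.
Qed.

Lemma bv_ofK n (z : bv n) : bv_of_nat n (bv_val z) = z.
Proof.
have [g hg gh] := hbv_bij n.
by rewrite -(gh z) /hbv bvK.
Qed.

Lemma bv_val_lt n (z : bv n) : bv_val z < 2 ^ n.
Proof.
have [g hg gh] := hbv_bij n.
by rewrite -(gh z) /hbv bvK.
Qed.

Lemma forall_rev (P : nat -> bool) n : [forall i : 'I_n, P (n.-1 - i)] = all P (iota 0 n).
Proof.
apply/forallP/allP => H j.
  rewrite mem_iota add0n => /andP [_ hj].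
  have := H (rev_ord (Ordinal hj)) => /=.
  by rewrite (_ : n.-1 - (n - j.+1) = j) //; lia.
apply: H; rewrite mem_iota; have := ltn_ord j; lia.
Qed.

Lemma bv_val0 n : bv_val (bv0 n) = 0.
Proof. by rewrite /bv_val big1 // => i _; rewrite tnth_mktuple. Qed.

Lemma cond_eq n (a : bv n) (X Y : 'I_(2 ^ n)) :
  (bv_xor (bv_add (hbv X) a) (bv_add (hbv Y) a) == bv_add (bv_xor (hbv X) (hbv Y)) (bv0 n))
  = cond n (bv_val a) false false X Y.
Proof.
rewrite /bv_add bv_val0 addn0 bv_ofK /hbv !bvK //.
rewrite eqEtuple /cond /= -forall_rev.
apply: eq_forallb => i.
by rewrite !tnth_mktuple !addn0.
Qed.

Lemma card_K n (a : bv n) :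
  #|[set xy : bv n * bv n |
       bv_xor (bv_add xy.1 a) (bv_add xy.2 a) == bv_add (bv_xor xy.1 xy.2) (bv0 n)]|
  = K n (bv_val a) false false.
Proof.
rewrite cardsE -sum1_card big_mkcond /= -(pair_big predT predT
  (fun x y => if (x, y) \in [pred xy : bv n * bv n | bv_xor (bv_add xy.1 a) (bv_add xy.2 a) == bv_add (bv_xor xy.1 xy.2) (bv0 n)] then 1 else 0)) /=.
rewrite (reindex (@hbv n)) /=; last by apply: onW_bij; apply: hbv_bij.
rewrite /K big_mkord; apply: eq_bigr => X _.
rewrite (reindex (@hbv n)) /=; last by apply: onW_bij; apply: hbv_bij.
rewrite big_mkord; apply: eq_bigr => Y _.
by rewrite inE /= cond_eq; case: cond.
Qed.

Lemma sum_pow2 n : \sum_(j < n) 2 ^ j = 2 ^ n - 1.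
Proof.
elim: n => [|n IH]; first by rewrite big_ord0.
have hp : 0 < 2 ^ n by rewrite expn_gt0.
rewrite big_ord_recr /= IH expnS; lia.
Qed.

Lemma bv_val_compl n (x : bv n) : bv_val (bv_compl x) = 2 ^ n - 1 - bv_val x.
Proof.
suff : bv_val x + bv_val (bv_compl x) = 2 ^ n - 1 by lia.
rewrite /bv_val -big_split /=.
rewrite (eq_bigr (fun i : 'I_n => 2 ^ (n.-1 - i))); last first.
  by move=> i _; rewrite /bv_compl tnth_mktuple -mulnDl; case: (tnth x i); rewrite /= mul1n.
by rewrite (sum_rev (fun k => 2 ^ k)) sum_pow2.
Qed.

Import GRing.Theory Num.Theory.
Local Open Scope ring_scope.

Theorem lemma5 (n : nat) (alpha : bv n) (i : 'I_n) (hi : val i = n.-1)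
  (h : tnth alpha i = false) :
  adp_xor (bv_compl alpha) (bv_compl alpha) (bv0 n) <= adp_xor alpha alpha (bv0 n).
Proof.
rewrite /adp_xor !card_K bv_val_compl.
have hodd : odd (bv_val alpha) = false.
  have : tnth (bv_of_nat n (bv_val alpha)) i = false by rewrite bv_ofK.
  by rewrite tnth_mktuple hi subnn expn0 divn1.
have hlt := @bv_val_lt n alpha.
destruct n as [|m]; first by have := ltn_ord i.
rewrite ler_pM2r ?invr_gt0 ?ltr0n ?expn_gt0 // ler_nat.
exact: Kmain.
Qed.
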